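(* In each iteration of Algorithm 1 (with $i^*,i_L$ the quantities of that iteration), for every $i$ with $i^*<i<b(i^* )$ we have $\mathrm{avg}(i^*,i)\le\mathrm{avg}(i,b(i^* ))$, and for every $i$ with $i_L<i<i^*$ we have $\mathrm{avg}(i,b(i^* ))<\mathrm{avg}(i,i^* )$.
   Context: Problem (P): given an integer $n\ge1$, reals $0<q_1\le\cdots\le q_n$, $z_1,\dots,z_n>0$ and $K>0$, maximize $\sum_{i=1}^n x_i$ subject to $0\le x_i\le q_i$, $0\le x_1\le\cdots\le x_n$, $\sum_{i=1}^n z_ix_i\le K$. For $1\le i<j\le n+1$ let $\mathrm{sum}(i,j)=z_i+\cdots+z_{j-1}$ and $\mathrm{avg}(i,j)=\mathrm{sum}(i,j)/(j-i)$. Algorithm 1 (run on an instance of (P)): Initialize $S=\{0,n+1\}$, $y_i=\mathrm{avg}(i,n+1)$ and $x_i=0$ for $i=1,\dots,n$, and $\hat B=K$. While $\hat B>0$ and $S\ne\{0,1,\dots,n+1\}$, perform an iteration: let $i^*$ be the index $i\in\{1,\dots,n\}\setminus S$ minimizing $y_i$, ties broken in favour of the smallest index; let $i_L=\max\{j\in S:j<i^*\}$ and $i_R=\min\{j\in S:j>i^*\}$; set $d=\min\{\hat B/((i_R-i^* )y_{i^*}),\ q_{i^*}-x_{i^*}\}$; set $\hat B\leftarrow\hat B-d(i_R-i^* )y_{i^*}$; set $x_i\leftarrow x_i+d$ for all $i^*\le i<i_R$; set $y_i\leftarrow\mathrm{avg}(i,i^* )$ for all $i_L<i<i^*$; add $i^*$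 to $S$. Finally output $x_1,\dots,x_n$. Blocker: for $1\le i\le n$, $b(i)$ is the value of $i^*$ in the last iteration in which $y_i$ is updated (i.e. the last iteration with $i_L<i<i^*$); if $y_i$ is never updated, $b(i)=n+1$. *)

(* Defs.v *)
From mathcomp Require Import all_boot all_order all_algebra.
Set Implicit Arguments. Unset Strict Implicit. Unset Printing Implicit Defensive.
Import Order.TTheory GRing.Theory Num.Theory.
Local Open Scope ring_scope.

Section Algo.
Variable R : realFieldType.
Variable n : nat.
Variables (q z : nat -> R) (K : R).

Definition sumz (i j : nat) : R := \sum_(i <= k < j) z k.
Definition avg (i j : nat) : R := sumz i j / (j - i)%:R.

(* state of Algorithm 1: the set S (as a boolean predicate on indices),
   the vectors y and x, and the remaining budget Bhat *)
Record state := State { stS : nat -> bool; sty : nat -> R; stx : nat -> R; stB : R }.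

Definition init : state :=
  State (fun j => (j == 0)%N || (j == n.+1)) (fun i => avg i n.+1) (fun _ => 0) K.

Definition cands (s : state) : seq nat := [seq i <- iota 1 n | ~~ stS s i].

(* loop condition: Bhat > 0 and S <> {0,...,n+1} *)
Definition loop_cond (s : state) : bool := (0 < stB s) && (cands s != [::]).

(* i^* : the first (= smallest) index of {1..n}\S minimizing y *)
Definition istar (s : state) : nat :=
  let C := cands s in
  nth 0%N C (find (fun i => all (fun j => sty s i <= sty s j) C) C).

Definition ileft (s : state) : nat := \max_(j < istar s | stS s j) j.

(* i_R = min { j in S : j > i^* } *)
Definition iright (s : state) : nat :=
  let i0 := istar s in
  (i0.+1 + find (stS s) (iota i0.+1 (n.+1 - i0)))%N.

Definition iteration (s : state) : state :=
  let ist := istar s in let iL := ileft s in let iR := iright s in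
  let w := (iR - ist)%:R * sty s ist in
  let d := Num.min (stB s / w) (q ist - stx s ist) in
  State (fun j => (j == ist) || stS s j)
        (fun i => if (iL < i < ist)%N then avg i ist else sty s i)
        (fun i => if (ist <= i < iR)%N then stx s i + d else stx s i)
        (stB s - d * w).

Definition step (s : state) : state := if loop_cond s then iteration s else s.

(* state at the start of iteration number k (k = 0, 1, ...) *)
Definition run (k : nat) : state := iter k step init.

(* iteration number k is actually performed by the algorithm
   (once the loop condition fails, the state no longer changes) *)
Definition performed (k : nat) : bool := loop_cond (run k).

(* the iterations in which y_i ist updated, i.e. i_L < i < i^* *)
Definition updates (i : nat) : seq nat :=
  [seq k <- iota 0 n.+1 | performed k && (ileft (run k) < i < istar (run k))%N].

Definition blocker (i : nat) : nat :=
  if updates i is [::] then n.+1 else istar (run (last 0%N (updates i))).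

End Algo.

(* Main.v *)
Require Import Defs.
From mathcomp Require Import all_boot all_order all_algebra.
From mathcomp Require Import lra zify.
Import Order.TTheory GRing.Theory Num.Theory.
Local Open Scope ring_scope.
Set Implicit Arguments. Unset Strict Implicit.

Lemma L1 (R : realFieldType) (S1 S2 p r : R) : 0 < p -> 0 < r ->
  (S1+S2)/(p+r) <= S2/r -> S1/p <= S2/r.
Proof.
move=> hp hr.
have e1 : S1 = S1/p * p by rewrite divfK // gt_eqF.
have e2 : S2 = S2/r * r by rewrite divfK // gt_eqF.
move: (S1/p) (S2/r) e1 e2 => A B -> ->.
rewrite ler_pdivrMr; last by lra.
nra.
Qed.

Lemma L2 (R : realFieldType) (S1 S2 p r : R) : 0 < p -> 0 < r ->
  S2/r < (S1+S2)/(p+r) -> (S1+S2)/(p+r) < S1/p.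
Proof.
move=> hp hr.
have e1 : S1 = S1/p * p by rewrite divfK // gt_eqF.
have e2 : S2 = S2/r * r by rewrite divfK // gt_eqF.
move: (S1/p) (S2/r) e1 e2 => A B -> ->.
rewrite ltr_pdivlMr; last by lra.
rewrite ltr_pdivrMr; last by lra.
nra.
Qed.

Section S.
Variable R : realFieldType.
Variable n : nat.
Variables (q z : nat -> R) (K : R).

Lemma ex_min (y : nat -> R) (C : seq nat) : C != [::] ->
  has (fun i => all (fun j => y i <= y j) C) C.
Proof.
suff H : C != [::] -> exists2 x, x \in C & all (fun j => y x <= y j) C.
  by move=> /H [x xC hx]; apply/hasP; exists x.
elim: C => [//|a C IH] _.
case: (altP (C =P [::])) => [->|hC].
  by exists a; rewrite ?inE //= lexx.
have [x xC hx] := IH hC.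
case: (lerP (y a) (y x)) => ha.
  exists a; first by rewrite inE eqxx.
  rewrite /= lexx /=; apply/allP => j jC; apply: le_trans ha _; exact: (allP hx).
exists x; first by rewrite inE xC orbT.
rewrite /= (ltW ha) /=; exact hx.
Qed.

Lemma mem_cands (s : state R) j : (j \in cands n s) = [&& (1 <= j)%N, (j <= n)%N & ~~ stS s j].
Proof.
rewrite /cands mem_filter mem_iota.
by case: (stS s j); rewrite /= ?andbF ?andbT // add1n ltnS.
Qed.

Lemma istar_facts (s : state R) : cands n s != [::] ->
  [/\ istar n s \in cands n s,
      forall j, j \in cands n s -> sty s (istar n s) <= sty s j &
      forall j, j \in cands n s -> (j < istar n s)%N -> sty s (istar n s) < sty s j].
Proof.
move=> hC.
set C := cands n s.
set P := (fun i => all (fun j => sty s i <= sty s j) C).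
have hP := ex_min (sty s) hC.
have hf : (find P C < size C)%N by rewrite -has_find.
have Pist : P (istar n s) by exact: (nth_find 0%N hP).
have istC : istar n s \in C by exact: mem_nth.
have hmin : forall j, j \in C -> sty s (istar n s) <= sty s j by move=> j jC; exact: (allP Pist).
split => // j jC ltj.
have hij : (index j C < find P C)%N.
  rewrite ltnNge; apply/negP => hle.
  move: hle; rewrite leq_eqVlt => /orP [/eqP he|hlt].
    by move: ltj; rewrite /istar -/C -/P he nth_index // ltnn.
  have hs : sorted ltn C by apply: sorted_filter; [exact: ltn_trans | exact: iota_ltn_sorted].
  have := sorted_ltn_nth ltn_trans 0%N hs.
  move=> /(_ (find P C) (index j C)); rewrite !inE index_mem jC hf => /(_ isT isT hlt).
  rewrite nth_index // => h.
  by move: ltj; rewrite /istar -/C -/P ltnNge (ltnW h).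
have := before_find 0%N hij; rewrite nth_index // /P => /negbT /allPn [j' j'C].
rewrite -ltNge => hj'.
exact: le_lt_trans (hmin _ j'C) hj'.
Qed.

Lemma ileft_facts (s : state R) : stS s 0 -> (0 < istar n s)%N ->
  [/\ stS s (ileft n s), (ileft n s < istar n s)%N,
      (forall j, (ileft n s < j < istar n s)%N -> ~~ stS s j) &
      (forall j, stS s j -> (j < istar n s)%N -> (j <= ileft n s)%N)].
Proof.
move=> h0 hpos.
set ist := istar n s.
have ub : forall j, stS s j -> (j < ist)%N -> (j <= ileft n s)%N.
  move=> j hj jl.
  exact: (@leq_bigmax_cond _ (fun i : 'I_ist => stS s i) (fun i => nat_of_ord i) (Ordinal jl) hj).
pose A := [pred i : 'I_ist | stS s i].
have cA : (0 < #|A|)%N by apply/card_gt0P; exists (Ordinal hpos).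
have [i0 i0A Heq] := @eq_bigmax_cond _ A (fun i => nat_of_ord i) cA.
have e : ileft n s = i0 by rewrite /ileft; exact Heq.
rewrite e in ub *.
split => //.
move=> j /andP [h1 h2]; apply/negP => hj.
by have := ub j hj h2; rewrite leqNgt h1.
Qed.

Notation run := (run n q z K).
Notation performed := (performed n q z K).
Notation S m := (stS (run m)).

Lemma runS m : run m.+1 = step n q z (run m).
Proof. by []. Qed.

Lemma run_np m : ~~ performed m -> run m.+1 = run m.
Proof. by rewrite runS /step /performed => /negbTE ->. Qed.

Lemma run_np_add m d : ~~ performed m -> run (m + d) = run m.
Proof.
move=> h; elim: d => [|d IH]; first by rewrite addn0.
rewrite addnS run_np; first exact IH.
by move: h; rewrite /Defs.performed -IH.
Qed.

Lemma perf_prev m : performed m.+1 -> performed m.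
Proof.
apply: contraLR => h; rewrite /performed run_np //.
Qed.

Lemma S_step m j : performed m -> S m.+1 j = (j == istar n (run m)) || S m j.
Proof. by rewrite runS /step /performed => ->. Qed.

Lemma y_step m i : performed m -> sty (run m.+1) i =
  if (ileft n (run m) < i < istar n (run m))%N then avg z i (istar n (run m)) else sty (run m) i.
Proof. by rewrite runS /step /performed => ->. Qed.

Lemma S_mono m d j : S m j -> S (m + d) j.
Proof.
move=> h; elim: d => [|d IH]; first by rewrite addn0.
rewrite addnS; case hp: (performed (m + d)).
  by rewrite S_step // IH orbT.
by rewrite run_np ?hp.
Qed.

Lemma perf_cands m : performed m -> cands n (run m) != [::].
Proof. by case/andP. Qed.

Lemma S0 m : S m 0 && S m n.+1.
Proof.
elim: m => [|m IH]; first by apply/andP; split; rewrite /= ?eqxx ?orbT.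
case hp: (performed m); last by rewrite run_np ?hp.
by rewrite !S_step // (andP IH).1 (andP IH).2 !orbT.
Qed.

Lemma perf_count k : performed k -> (k <= count (S k) (iota 1 n))%N.
Proof.
elim: k => [//|k IH] hp.
have hk := perf_prev hp.
have [istC _ _] := istar_facts (perf_cands hk).
move: istC; rewrite mem_cands => /and3P [h1 h2 h3].
have -> : count (S k.+1) (iota 1 n) = (count (S k) (iota 1 n) + 1)%N.
  rewrite (eq_count (a2 := predU (pred1 (istar n (run k))) (S k))); last first.
    by move=> x; rewrite S_step.
  have := count_predUI (pred1 (istar n (run k))) (S k) (iota 1 n).
  rewrite (eq_count (a1 := predI _ _) (a2 := pred0)); last first.
    by move=> x /=; case: eqP => // ->; rewrite (negbTE h3).
  rewrite count_pred0 addn0 => ->.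
  rewrite count_uniq_mem ?iota_uniq // mem_iota h1 /= add1n ltnS h2.
  by rewrite addnC.
by rewrite addn1 ltnS IH.
Qed.

Lemma perf_le k : performed k -> (k <= n)%N.
Proof.
move=> /perf_count h; apply: leq_trans h _.
by rewrite (leq_trans (count_size _ _)) // size_iota.
Qed.

Definition Bm m i :=
  let l := [seq k <- iota 0 m | performed k && (ileft n (run k) < i < istar n (run k))%N] in
  if l is [::] then n.+1 else istar n (run (last 0%N l)).

Lemma Bm_step m i : Bm m.+1 i =
  if performed m && (ileft n (run m) < i < istar n (run m))%N then istar n (run m) else Bm m i.
Proof.
rewrite /Bm -[m.+1]addn1 iotaD filter_cat /= add0n.
case: ifP => _; last by rewrite cats0.
set l := filter _ _.
by case: l => [|a l] //=; rewrite last_cat.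
Qed.

Definition Inv m := forall i, (1 <= i <= n)%N -> ~~ S m i ->
  [/\ (i < Bm m i)%N, S m (Bm m i), (forall j, (i < j < Bm m i)%N -> ~~ S m j) &
      sty (run m) i = avg z i (Bm m i)].

Lemma inv_all m : Inv m.
Proof.
elim: m => [|m IH].
  move=> i /andP [h1 h2] /= _; rewrite /Bm /= ltnS h2 eqxx; split => //.
  move=> j /andP [hj1 hj2]; apply/negP => /orP [/eqP e|/eqP e]; lia.
move=> i hi.
case hp: (performed m); last first.
  by rewrite run_np ?hp // Bm_step hp; exact: IH.
have [s0 sn] := andP (S0 m).
have [istC _ _] := istar_facts (perf_cands hp).
move: istC; rewrite mem_cands => /and3P [h1 h2 h3].
have [iLS iLlt iLno iLub] := ileft_facts s0 h1.
rewrite S_step // negb_or => /andP [hne hnS].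
rewrite Bm_step hp y_step //=.
case: ifP => hc.
  split => //; first by case/andP: hc.
    by rewrite S_step // eqxx.
  move=> j /andP [hj1 hj2]; rewrite S_step // negb_or; apply/andP; split.
    by rewrite neq_ltn hj2.
  apply: iLno; case/andP: hc => hc1 _; rewrite hj2 andbT; exact: ltn_trans hc1 hj1.
have [b1 b2 b3 b4] := IH i hi hnS.
split => //; first by rewrite S_step // b2 orbT.
move=> j /andP [hj1 hj2]; rewrite S_step // negb_or (b3 j) ?hj1 ?hj2 // andbT.
apply/negP => /eqP ej; subst j.
have hiL : (i <= ileft n (run m))%N.
  by move: hc; rewrite hj1 andbT => /negbT; rewrite -leqNgt.
have hne2 : ileft n (run m) != i by apply/negP => /eqP e; move: hnS; rewrite -e iLS.
have : ~~ S m (ileft n (run m)).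
  apply: b3; rewrite (ltn_trans iLlt hj2) andbT ltn_neqAle hiL andbT eq_sym //.
by rewrite iLS.
Qed.

Lemma Bm_stable k d : performed k -> Bm (k + d) (istar n (run k)) = Bm k (istar n (run k)).
Proof.
move=> hk; set ist := istar n (run k).
elim: d => [|d IH]; first by rewrite addn0.
rewrite addnS Bm_step IH.
case hp: (performed (k + d)) => //=.
case: d IH hp => [|d] IH hp; first by rewrite addn0 ltnn andbF.
have hS : S (k + d.+1) ist.
  rewrite (_ : (k + d.+1 = k.+1 + d)%N); last by lia.
  by apply: S_mono; rewrite S_step // eqxx.
have [s0 sn] := andP (S0 (k + d.+1)).
have [istC _ _] := istar_facts (perf_cands hp).
move: istC; rewrite mem_cands => /and3P [h1 _ _].
have [_ _ _ ub] := ileft_facts s0 h1.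
case hl: (ist < istar n (run (k + d.+1)))%N; last by rewrite andbF.
by rewrite andbT ltnNge ub.
Qed.

Lemma uniq_next (P : pred nat) i b1 b2 : (i < b1)%N -> (i < b2)%N -> P b1 -> P b2 ->
  (forall j, (i < j < b1)%N -> ~~ P j) -> (forall j, (i < j < b2)%N -> ~~ P j) -> b1 = b2.
Proof.
move=> h1 h2 p1 p2 n1 n2.
case: (ltngtP b1 b2) => // hb.
  by have := n2 b1; rewrite h1 hb p1 => /(_ isT).
by have := n1 b2; rewrite h2 hb p2 => /(_ isT).
Qed.

Lemma avg_split a m c : (a < m < c)%N ->
  avg z a c = (sumz z a m + sumz z m c) / ((m - a)%:R + (c - m)%:R).
Proof.
move=> /andP [h1 h2].
rewrite /avg /sumz -(big_cat_nat (ltnW h1) (ltnW h2)) -natrD.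
by congr (_ / _%:R); lia.
Qed.

End S.

Unset Implicit Arguments.
Set Strict Implicit.

Theorem lemma9 (R : realFieldType) (n : nat) (q z : nat -> R) (K : R) :
  (1 <= n)%N ->
  (forall i, (1 <= i <= n)%N -> 0 < q i) ->
  (forall i, (1 <= i < n)%N -> q i <= q i.+1) ->
  (forall i, (1 <= i <= n)%N -> 0 < z i) ->
  0 < K ->
  forall k : nat, performed n q z K k ->
    let s := run n q z K k in
    let ist := istar n s in
    let iL := ileft n s in
    let b := blocker n q z K ist in
    (forall i, (ist < i < b)%N -> avg z ist i <= avg z i b) /\
    (forall i, (iL < i < ist)%N -> avg z i b < avg z i ist).
Proof.
move=> _ _ _ _ _ k hk; cbv zeta.
set ist := istar n (run n q z K k).
have hC := perf_cands hk.
have [istC hmin hstrict] := istar_facts hC.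
move: (istC); rewrite mem_cands => /and3P [h1 h2 h3].
have [s0 sn] := andP (@S0 R n q z K k).
have [iLS iLlt iLno iLub] := ileft_facts s0 h1.
have -> : blocker n q z K ist = Bm n q z K k ist.
  change (Bm n q z K n.+1 ist = Bm n q z K k ist).
  have hkn := perf_le hk.
  rewrite (_ : n.+1 = k + (n.+1 - k))%N; last by lia.
  exact: Bm_stable.
have [b1 b2 b3 b4] := @inv_all R n q z K k ist (ltac:(by rewrite h1 h2)) h3.
set b := Bm n q z K k ist in b1 b2 b3 b4 *.
have ble : (b <= n.+1)%N.
  rewrite leqNgt; apply/negP => hb.
  by have := b3 n.+1; rewrite hb ltnS h2 sn => /(_ isT).
have pos : forall a c, (a < c)%N -> (0:R) < (c - a)%:R.
  by move=> a c hac; rewrite ltr0n subn_gt0.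
split.
  move=> i /andP [hi1 hi2].
  have hnS : ~~ stS (run n q z K k) i by apply: b3; rewrite hi1 hi2.
  have hi : (1 <= i <= n)%N by apply/andP; split; lia.
  have [c1 c2 c3 c4] := @inv_all R n q z K k i hi hnS.
  have e : Bm n q z K k i = b.
    apply: (uniq_next c1 hi2 c2 b2 c3) => j /andP [hj1 hj2].
    by apply: b3; rewrite hj2 andbT; exact: ltn_trans hi1 hj1.
  have := hmin i; rewrite mem_cands hnS andbT hi => /(_ isT).
  rewrite b4 c4 e (@avg_split R z ist i b); last by rewrite hi1 hi2.
  rewrite /avg => H.
  exact: L1 (pos _ _ hi1) (pos _ _ hi2) H.
move=> i /andP [hi1 hi2].
have hnS : ~~ stS (run n q z K k) i by apply: iLno; rewrite hi1 hi2.
have hi : (1 <= i <= n)%N by apply/andP; split; lia.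
have [c1 c2 c3 c4] := @inv_all R n q z K k i hi hnS.
have hib : (i < b)%N by exact: ltn_trans hi2 b1.
have e : Bm n q z K k i = b.
  apply: (uniq_next c1 hib c2 b2 c3) => j /andP [hj1 hj2].
  case: (ltngtP j ist) => hj.
  - by apply: iLno; rewrite hj andbT; exact: ltn_trans hi1 hj1.
  - by apply: b3; rewrite hj hj2.
  - by rewrite hj.
have := hstrict i; rewrite mem_cands hnS andbT hi => /(_ isT hi2).
rewrite b4 c4 e (@avg_split R z i ist b); last by rewrite hi2 b1.
rewrite /avg => H.
exact: L2 (pos _ _ hi2) (pos _ _ b1) H.
Qed.
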